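(* Let $L_x, L_y > 0$ and $\mathcal{D} = (0,L_x)\times(0,L_y)$. For non-negative integers $m,n$ with $(m,n)\neq(0,0)$ let $\Phi_{mn}(x,y) = \cos(m\pi x/L_x)\cos(n\pi y/L_y)$ (up to a positive normalisation constant), with wavenumber $k_{mn} = \sqrt{(m\pi/L_x)^2 + (n\pi/L_y)^2}$, so that $-\Delta\Phi_{mn} = k_{mn}^2\Phi_{mn}$ in $\mathcal{D}$ and $\bm{n}\cdot\nabla\Phi_{mn} = 0$ on $\partial\mathcal{D}$. For $h>0$ let $\omega_{mn}(h) = \sqrt{k_{mn}\tanh(k_{mn} h)}$. Then there do not exist three such modes $\Psi_j = \Phi_{m_j n_j}$ ($j=1,2,3$), with wavenumbers $K_j = k_{m_j n_j}$ and frequencies $\Omega_j = \omega_{m_j n_j}$, together with a depth $h_c \in (0,\infty)$, such that both $\iint_{\mathcal{D}} \Psi_1\Psi_2\Psi_3\,\mathrm{d}A \neq 0$ and $\Omega_1(h_c) + \Omega_2(h_c) = \Omega_3(h_c)$. That is, resonant triads cannot exist in a rectangular cylinder of finite depth.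
   Context: A resonant triad in a cylinder with cross-section $\mathcal{D}$ and dimensionless fluid depth $h$ consists of three Neumann Laplacian eigenmodes $\Psi_1,\Psi_2,\Psi_3$ on $\mathcal{D}$ with positive wavenumbers $K_j$ (i.e. $-\Delta\Psi_j = K_j^2\Psi_j$) such that the correlation condition $\iint_{\mathcal{D}}\Psi_1\Psi_2\Psi_3\,\mathrm{d}A\neq 0$ holds and, at some critical depth $h_c\in(0,\infty)$, the angular frequencies $\Omega_j = \sqrt{K_j\tanh(K_j h_c)}$ satisfy $\Omega_1+\Omega_2=\Omega_3$ (other sign combinations reduce to this one by relabelling). *)

(* Defs.v *)
From Stdlib Require Import Reals.
From Coquelicot Require Import Coquelicot.
Open Scope R_scope.

Definition tanh (x : R) : R := (exp x - exp (- x)) / (exp x + exp (- x)).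

(* Neumann eigenmode of the rectangle (0,Lx) x (0,Ly), unnormalised *)
Definition Phi (Lx Ly : R) (m n : nat) (x y : R) : R :=
  cos (INR m * PI * x / Lx) * cos (INR n * PI * y / Ly).

Definition kmn (Lx Ly : R) (m n : nat) : R :=
  sqrt ((INR m * PI / Lx) ^ 2 + (INR n * PI / Ly) ^ 2).

Definition omega (Lx Ly : R) (m n : nat) (h : R) : R :=
  sqrt (kmn Lx Ly m n * tanh (kmn Lx Ly m n * h)).

(* area integral over the rectangle, as an iterated Riemann integral
   (integrands here are continuous, so this is the area integral) *)
Definition rect_integral (Lx Ly : R) (f : R -> R -> R) : R :=
  RInt (fun x => RInt (fun y => f x y) 0 Ly) 0 Lx.

(* Main.v *)
Require Import Defs.
From Stdlib Require Import Reals Lra Lia Psatz.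
From Coquelicot Require Import Coquelicot.
Open Scope R_scope.
Notation th := Defs.tanh.

Lemma tanh_bounds t : -1 < th t < 1.
Proof.
  unfold Defs.tanh. assert (A := exp_pos t). assert (B := exp_pos (-t)).
  assert (E1 : (exp t - exp (- t)) / (exp t + exp (- t)) = 1 - 2 * exp (-t) / (exp t + exp (- t))) by (field; lra).
  assert (E2 : (exp t - exp (- t)) / (exp t + exp (- t)) = -1 + 2 * exp t / (exp t + exp (- t))) by (field; lra).
  assert (0 < 2 * exp (-t) / (exp t + exp (- t))) by (apply Rdiv_lt_0_compat; lra).
  assert (0 < 2 * exp t / (exp t + exp (- t))) by (apply Rdiv_lt_0_compat; lra).
  split; lra.
Qed.

Lemma tanh_pos t : 0 < t -> 0 < th t.
Proof.
  intros Ht. unfold Defs.tanh. assert (A := exp_pos t). assert (B := exp_pos (-t)).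
  assert (exp (-t) < exp t) by (apply exp_increasing; lra).
  apply Rdiv_lt_0_compat; lra.
Qed.

Lemma tanh_0 : th 0 = 0.
Proof. unfold Defs.tanh. rewrite Ropp_0. unfold Rdiv. ring. Qed.

Lemma tanh_deriv t : derivable_pt_lim th t (1 - th t ^ 2).
Proof.
  apply is_derive_Reals. unfold Defs.tanh.
  assert (A := exp_pos t). assert (B := exp_pos (-t)).
  auto_derive. lra. field. lra.
Qed.

Lemma tanh2_deriv c : derivable_pt_lim (fun t => th t ^ 2) c (2 * th c * (1 - th c ^ 2)).
Proof.
  replace (2 * th c * (1 - th c ^ 2)) with ((INR 2 * th c ^ Init.Nat.pred 2) * (1 - th c ^ 2)) by (simpl; ring).
  apply (derivable_pt_lim_comp th (fun y => y ^ 2)). apply tanh_deriv.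
  apply derivable_pt_lim_pow.
Qed.

Lemma tanh_incr x y : x < y -> th x < th y.
Proof.
  intros Hxy.
  destruct (MVT_cor2 th (fun t => 1 - th t ^ 2) x y Hxy) as [c [Hc _]].
  { intros; apply tanh_deriv. }
  assert (T := tanh_bounds c).
  assert (0 < (1 - th c ^ 2) * (y - x)) by (apply Rmult_lt_0_compat; nra).
  lra.
Qed.

Definition Dt x := th x - x * (1 - th x ^ 2).

Lemma Dt_pos x : 0 < x -> 0 < Dt x.
Proof.
  intros Hx.
  destruct (MVT_cor2 Dt (fun t => 2 * t * th t * (1 - th t ^ 2)) 0 x Hx) as [c [Hc Hc']].
  { intros c _. unfold Dt.
    replace (2 * c * th c * (1 - th c ^ 2)) with
      ((1 - th c ^ 2) - ((1 * (1 - th c ^ 2)) + c * (0 - (2 * th c * (1 - th c ^ 2)))))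
      by (simpl; ring).
    apply (derivable_pt_lim_minus th (fun t => t * (1 - th t ^ 2))). apply tanh_deriv.
    apply (derivable_pt_lim_mult id (fun t => 1 - th t ^ 2)). apply derivable_pt_lim_id.
    apply (derivable_pt_lim_minus (fun _ => 1) (fun t => th t ^ 2)). apply derivable_pt_lim_const.
    apply tanh2_deriv. }
  assert (D0 : Dt 0 = 0) by (unfold Dt; rewrite tanh_0; ring).
  assert (T := tanh_bounds c). assert (P := tanh_pos c (proj1 Hc')).
  assert (0 < 2 * c * th c * (1 - th c ^ 2) * (x - 0)).
  { assert (0 < 1 - th c ^ 2) by nra.
    assert (0 < 2 * c * th c) by (apply Rmult_lt_0_compat; [lra|exact P]).
    apply Rmult_lt_0_compat; [apply Rmult_lt_0_compat|]; lra. }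
  lra.
Qed.

Lemma tanh_ratio x y : 0 < x -> x < y -> x * th y < y * th x.
Proof.
  intros Hx Hxy.
  set (G := fun t => t * th x - x * th t).
  destruct (MVT_cor2 G (fun t => th x - x * (1 - th t ^ 2)) x y Hxy) as [c [Hc Hc']].
  { intros c _. unfold G.
    replace (th x - x * (1 - th c ^ 2)) with ((1 * th x + c * 0) - x * (1 - th c ^ 2)) by ring.
    apply (derivable_pt_lim_minus (fun t => t * th x) (fun t => x * th t)).
    apply (derivable_pt_lim_mult id (fun _ => th x)). apply derivable_pt_lim_id.
    apply derivable_pt_lim_const.
    apply (derivable_pt_lim_scal th). apply tanh_deriv. }
  assert (D := Dt_pos x Hx). unfold Dt in D.
  assert (Tc := tanh_incr x c (proj1 Hc')). assert (Px := tanh_pos x Hx).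
  assert (th x ^ 2 < th c ^ 2) by nra.
  assert (0 < (th x - x * (1 - th c ^ 2)) * (y - x)).
  { apply Rmult_lt_0_compat; nra. }
  unfold G in Hc. lra.
Qed.
Lemma sin_nPI (j : nat) : sin (INR j * PI) = 0.
Proof. apply sin_eq_0_1. exists (Z.of_nat j). now rewrite <- INR_IZR_INZ. Qed.

Lemma cos_int (L : R) (j : nat) : 0 < L -> (0 < j)%nat ->
  is_RInt (fun x => cos (INR j * PI * x / L)) 0 L 0.
Proof.
  intros HL Hj.
  assert (Hj' : 0 < INR j) by (apply lt_0_INR; lia).
  assert (HP := PI_RGT_0).
  set (f := fun x => sin (INR j * PI * x / L) * (L / (INR j * PI))).
  assert (Hf : minus (f L) (f 0) = 0).
  { unfold f, minus, plus, opp; simpl.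
      replace (INR j * PI * L / L) with (INR j * PI) by (field; lra).
      rewrite sin_nPI. replace (INR j * PI * 0 / L) with 0 by (field; lra).
      rewrite sin_0. ring. }
  enough (H : is_RInt (fun x => cos (INR j * PI * x / L)) 0 L (minus (f L) (f 0)))
    by (rewrite Hf in H; exact H).
  apply (is_RInt_derive (V:=R_CompleteNormedModule) f).
  - intros x _. unfold f. auto_derive; auto. unfold Rdiv. field. repeat split; apply Rgt_not_eq; lra.
  - intros x _. apply continuous_comp.
    + apply (ex_derive_continuous (fun x => INR j * PI * x / L)). auto_derive; auto.
    + apply (ex_derive_continuous cos). auto_derive; auto.
Qed.

Lemma trig3 (A B C : R) :
  cos A * cos B * cos C =
  /4 * (cos (A + B + C) + cos (C - A - B) + cos (A - B + C) + cos (B + C - A)).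
Proof.
  unfold Rminus. rewrite !cos_plus, !sin_plus, !cos_neg, !sin_neg. field.
Qed.

Lemma tri_int (L : R) (m1 m2 m3 : nat) : 0 < L -> (m1 + m2 < m3)%nat ->
  RInt (fun x => cos (INR m1 * PI * x / L) * cos (INR m2 * PI * x / L)
                 * cos (INR m3 * PI * x / L)) 0 L = 0.
Proof.
  intros HL Hm. apply is_RInt_unique.
  set (j1 := (m1 + m2 + m3)%nat). set (j2 := (m3 - m1 - m2)%nat).
  set (j3 := (m1 + m3 - m2)%nat). set (j4 := (m2 + m3 - m1)%nat).
  assert (E1 : INR j1 = INR m1 + INR m2 + INR m3) by (unfold j1; rewrite !plus_INR; ring).
  assert (E2 : INR j2 = INR m3 - INR m1 - INR m2) by (unfold j2; rewrite !minus_INR by lia; ring).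
  assert (E3 : INR j3 = INR m1 - INR m2 + INR m3) by (unfold j3; rewrite minus_INR by lia; rewrite plus_INR; ring).
  assert (E4 : INR j4 = INR m2 + INR m3 - INR m1) by (unfold j4; rewrite minus_INR by lia; rewrite plus_INR; ring).
  apply (is_RInt_ext (fun x => scal (/4) (plus (plus (plus
      (cos (INR j1 * PI * x / L)) (cos (INR j2 * PI * x / L)))
      (cos (INR j3 * PI * x / L))) (cos (INR j4 * PI * x / L))))).
  - intros x _. rewrite trig3. unfold scal, plus; simpl. unfold mult; simpl.
    rewrite E1, E2, E3, E4. f_equal. repeat (apply f_equal2; [|apply f_equal; field; lra]). apply f_equal; field; lra.
  - assert (Hz : scal (/4) (plus (plus (plus 0 0) 0) (0:R)) = 0).
    { unfold scal, plus; simpl. unfold mult; simpl. ring. }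
    match goal with |- is_RInt ?F _ _ _ =>
      enough (H : is_RInt F 0 L (scal (/4) (plus (plus (plus 0 0) 0) (0:R))))
      by (rewrite Hz in H; exact H) end.
    apply (is_RInt_scal (V:=R_NormedModule)).
    apply (is_RInt_plus (V:=R_NormedModule)); [apply (is_RInt_plus (V:=R_NormedModule)); [apply (is_RInt_plus (V:=R_NormedModule))|]|];
    apply cos_int; auto; unfold j1, j2, j3, j4; lia.
Qed.
Definition C3 L a b c x := cos (INR a * PI * x / L) * cos (INR b * PI * x / L) * cos (INR c * PI * x / L).

Lemma C3_ex L a b c A B : 0 < L -> ex_RInt (C3 L a b c) A B.
Proof.
  intros HL. apply (ex_RInt_continuous (V:=R_CompleteNormedModule)). intros z _. apply (ex_derive_continuous (V:=R_NormedModule)).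
  unfold C3. auto_derive. repeat split; auto.
Qed.

Lemma rect_split Lx Ly m1 n1 m2 n2 m3 n3 : 0 < Lx -> 0 < Ly ->
  rect_integral Lx Ly
    (fun x y => Phi Lx Ly m1 n1 x y * Phi Lx Ly m2 n2 x y * Phi Lx Ly m3 n3 x y)
  = RInt (C3 Lx m1 m2 m3) 0 Lx * RInt (C3 Ly n1 n2 n3) 0 Ly.
Proof.
  intros HLx HLy. unfold rect_integral.
  rewrite (RInt_ext _ (fun x => scal (RInt (C3 Ly n1 n2 n3) 0 Ly) (C3 Lx m1 m2 m3 x))).
  - rewrite (RInt_scal (V:=R_CompleteNormedModule)) by (apply C3_ex; auto). unfold scal; simpl; unfold mult; simpl. ring.
  - intros x _.
    rewrite (RInt_ext _ (fun y => scal (C3 Lx m1 m2 m3 x) (C3 Ly n1 n2 n3 y))).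
    + rewrite (RInt_scal (V:=R_CompleteNormedModule)) by (apply C3_ex; auto). unfold scal; simpl; unfold mult; simpl. ring.
    + intros y _. unfold scal; simpl; unfold mult; simpl. unfold Phi, C3. ring.
Qed.

Lemma kmn_pos Lx Ly m n : 0 < Lx -> 0 < Ly -> (m, n) <> (0%nat, 0%nat) -> 0 < kmn Lx Ly m n.
Proof.
  intros HLx HLy Hmn. unfold kmn. apply sqrt_lt_R0.
  assert (HP := PI_RGT_0).
  destruct m as [|m].
  - destruct n as [|n]; [congruence|].
    assert (0 < INR (S n)) by (apply lt_0_INR; lia).
    assert (0 < INR (S n) * PI / Ly) by (apply Rdiv_lt_0_compat; nra).
    assert (0 <= (INR 0 * PI / Lx) ^ 2) by (apply pow2_ge_0). nra.
  - assert (0 < INR (S m)) by (apply lt_0_INR; lia).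
    assert (0 < INR (S m) * PI / Lx) by (apply Rdiv_lt_0_compat; nra).
    assert (0 <= (INR n * PI / Ly) ^ 2) by (apply pow2_ge_0). nra.
Qed.

Lemma coord_le L a b c : 0 < L -> (c <= a + b)%nat ->
  0 <= INR c * PI / L <= INR a * PI / L + INR b * PI / L.
Proof.
  intros HL H. assert (HP := PI_RGT_0).
  assert (Hc := pos_INR c). apply le_INR in H. rewrite plus_INR in H.
  split.
  - apply Rmult_le_pos; [nra| left; apply Rinv_0_lt_compat; lra].
  - unfold Rdiv. rewrite <- Rmult_plus_distr_r, <- Rmult_plus_distr_r.
    apply Rmult_le_compat_r; [left; apply Rinv_0_lt_compat; lra|]. nra.
Qed.

Lemma minkowski a1 b1 a2 b2 a3 b3 :
  0 <= a1 -> 0 <= b1 -> 0 <= a2 -> 0 <= b2 -> 0 <= a3 -> 0 <= b3 ->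
  a3 <= a1 + a2 -> b3 <= b1 + b2 ->
  sqrt (a3 ^ 2 + b3 ^ 2) <= sqrt (a1 ^ 2 + b1 ^ 2) + sqrt (a2 ^ 2 + b2 ^ 2).
Proof.
  intros.
  set (K1 := sqrt (a1 ^ 2 + b1 ^ 2)). set (K2 := sqrt (a2 ^ 2 + b2 ^ 2)).
  assert (E1 : K1 ^ 2 = a1 ^ 2 + b1 ^ 2) by (apply pow2_sqrt; nra).
  assert (E2 : K2 ^ 2 = a2 ^ 2 + b2 ^ 2) by (apply pow2_sqrt; nra).
  assert (P1 : 0 <= K1) by apply sqrt_pos. assert (P2 : 0 <= K2) by apply sqrt_pos.
  clearbody K1 K2.
  assert (CS : a1 * a2 + b1 * b2 <= K1 * K2).
  { assert ((a1 * a2 + b1 * b2) ^ 2 <= (K1 * K2) ^ 2).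
    { rewrite Rpow_mult_distr, E1, E2. assert (0 <= (a1*b2 - a2*b1)^2) by apply pow2_ge_0. nra. }
    assert (0 <= K1 * K2) by nra. nra. }
  rewrite <- (sqrt_pow2 (K1 + K2)) by lra.
  apply sqrt_le_1_alt. nra.
Qed.

Lemma sqrtF k h : 0 < k -> 0 < h ->
  sqrt (k * th (k * h)) = k * sqrt (th (k * h) / k).
Proof.
  intros Hk Hh.
  replace (k * th (k * h)) with (k ^ 2 * (th (k * h) / k)) by (field; lra).
  rewrite sqrt_mult_alt by (apply pow2_ge_0). rewrite sqrt_pow2 by lra. reflexivity.
Qed.

Lemma g_decr a s h : 0 < a -> a < s -> 0 < h -> th (s * h) / s < th (a * h) / a.
Proof.
  intros Ha Has Hh.
  assert (R := tanh_ratio (a * h) (s * h) ltac:(nra) ltac:(nra)).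
  assert (K : a * th (s * h) < s * th (a * h)).
  { apply Rmult_lt_reg_l with h; [lra|]. nra. }
  replace (th (s * h) / s) with ((a * th (s * h)) * / (a * s)) by (field; lra).
  replace (th (a * h) / a) with ((s * th (a * h)) * / (a * s)) by (field; lra).
  apply Rmult_lt_compat_r; [apply Rinv_0_lt_compat; nra| exact K].
Qed.

Lemma subadd K1 K2 K3 h : 0 < K1 -> 0 < K2 -> 0 < K3 -> 0 < h -> K3 <= K1 + K2 ->
  sqrt (K3 * th (K3 * h)) < sqrt (K1 * th (K1 * h)) + sqrt (K2 * th (K2 * h)).
Proof.
  intros H1 H2 H3 Hh Hle.
  apply Rle_lt_trans with (sqrt ((K1 + K2) * th ((K1 + K2) * h))).
  - apply sqrt_le_1_alt.
    assert (0 < th (K3 * h)) by (apply tanh_pos; nra).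
    assert (th (K3 * h) <= th ((K1 + K2) * h)).
    { destruct (Rle_lt_or_eq_dec _ _ Hle) as [Hl|He].
      - left. apply tanh_incr. nra.
      - rewrite He. right. reflexivity. }
    apply Rmult_le_compat; lra.
  - rewrite !sqrtF by lra.
    assert (G1 := g_decr K1 (K1 + K2) h H1 ltac:(lra) Hh).
    assert (G2 := g_decr K2 (K1 + K2) h H2 ltac:(lra) Hh).
    assert (P : 0 < th ((K1 + K2) * h) / (K1 + K2)).
    { apply Rdiv_lt_0_compat; [apply tanh_pos; nra| lra]. }
    assert (Q1 := sqrt_lt_1_alt _ _ (conj (Rlt_le _ _ P) G1)).
    assert (Q2 := sqrt_lt_1_alt _ _ (conj (Rlt_le _ _ P) G2)).
    rewrite Rmult_plus_distr_r.
    apply Rplus_lt_compat; apply Rmult_lt_compat_l; assumption.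
Qed.

Theorem mainTheorem3 (Lx Ly : R) (HLx : 0 < Lx) (HLy : 0 < Ly)
  (m1 n1 m2 n2 m3 n3 : nat)
  (H1 : (m1, n1) <> (0%nat, 0%nat))
  (H2 : (m2, n2) <> (0%nat, 0%nat))
  (H3 : (m3, n3) <> (0%nat, 0%nat)) :
  ~ (exists hc : R, 0 < hc /\
       rect_integral Lx Ly
         (fun x y => Phi Lx Ly m1 n1 x y * Phi Lx Ly m2 n2 x y * Phi Lx Ly m3 n3 x y)
         <> 0 /\
       omega Lx Ly m1 n1 hc + omega Lx Ly m2 n2 hc = omega Lx Ly m3 n3 hc).
Proof.
  intros [hc [Hh [Hint Hres]]].
  rewrite rect_split in Hint by assumption.
  assert (Hm : (m3 <= m1 + m2)%nat).
  { destruct (Compare_dec.le_lt_dec m3 (m1 + m2)) as [l|l]; auto.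
    exfalso. apply Hint. unfold C3. rewrite tri_int by assumption. ring. }
  assert (Hn : (n3 <= n1 + n2)%nat).
  { destruct (Compare_dec.le_lt_dec n3 (n1 + n2)) as [l|l]; auto.
    exfalso. apply Hint. unfold C3. rewrite (tri_int Ly n1 n2 n3) by assumption. ring. }
  assert (Ktri : kmn Lx Ly m3 n3 <= kmn Lx Ly m1 n1 + kmn Lx Ly m2 n2).
  { unfold kmn.
    destruct (coord_le Lx m1 m2 m3 HLx Hm). destruct (coord_le Ly n1 n2 n3 HLy Hn).
    destruct (coord_le Lx m1 0 m1 HLx ltac:(lia)). destruct (coord_le Lx m2 0 m2 HLx ltac:(lia)).
    destruct (coord_le Ly n1 0 n1 HLy ltac:(lia)). destruct (coord_le Ly n2 0 n2 HLy ltac:(lia)).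
    apply minkowski; assumption. }
  assert (S := subadd (kmn Lx Ly m1 n1) (kmn Lx Ly m2 n2) (kmn Lx Ly m3 n3) hc
    (kmn_pos _ _ _ _ HLx HLy H1) (kmn_pos _ _ _ _ HLx HLy H2) (kmn_pos _ _ _ _ HLx HLy H3) Hh Ktri).
  unfold omega in Hres. lra.
Qed.
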